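(* For every $n\geq 2$, let $D_n^2$ be the random variable that chooses independently a pair of trees $T,T'\in\mathcal{T}_n$ and computes $d_{\varphi,2}(T,T')^2$. Under the Yule model its expected value is $$E_Y(D_n^2)=\frac{2n}{n-1}\big(3n^2-10n-1+8(n+1)H_n-4(n+1)H_n^2\big),$$ where $H_n=\sum_{i=1}^n 1/i$ is the $n$-th harmonic number.
   Context: A phylogenetic tree with $n$ leaves is a fully resolved (binary) rooted tree, viewed as a directed graph with arcs pointing away from the root, whose leaves are bijectively labeled by $\{1,\dots,n\}$; $\mathcal{T}_n$ denotes the set of all such trees (up to isomorphism preserving labels). The depth $\delta_T(v)$ of a node $v$ is the number of arcs from the root to $v$. For leaves $i\neq j$, the cophenetic value $\varphi_T(i,j)$ is the depth of the lowest common ancestor of $i$ and $j$; also $\varphi_T(i,i)=\delta_T(i)$. The euclidean cophenetic metric is $d_{\varphi,2}(T_1,T_2)=\sqrt{\sum_{1\le i\le j\le n}(\varphi_{T_1}(i,j)-\varphi_{T_2}(i,j))^2}$. The Yule model gives $T\in\mathcal{T}_n$ probability $P_Y(T)=\frac{2^{n-1}}{n!}\prod_{v}\frac{1}{\ell_T(v)-1}$, the product over internal nodes $v$ of $T$, with $\ell_T(v)$ the number of leaves descending from $v$. The two trees are chosen independently, each with probability $P_Y$. *)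

(* Defs.v *)
From HB Require Import structures.
From mathcomp Require Import all_boot all_order all_algebra.
Set Implicit Arguments. Unset Strict Implicit. Unset Printing Implicit Defensive.
Import Order.TTheory GRing.Theory Num.Theory.
Local Open Scope ring_scope.

(* A phylogenetic tree on the leaf set 'I_n (labels 0..n-1 stand for 1..n),
   taken up to label-preserving isomorphism, is encoded by its set of
   clusters: each node v is identified with the set of leaves below v.
   [is_phylo H] says H is the cluster set of a fully resolved rooted tree:
   it contains the root cluster (all leaves) and every leaf {i}, no empty
   set, it is laminar (any two clusters are nested or disjoint), and every
   non-singleton cluster (= internal node) is the disjoint union of two
   clusters (its two children). *)
Definition laminar n (H : {set {set 'I_n}}) : bool :=
  [forall A in H, forall B in H,
     [|| A \subset B, B \subset A | [disjoint A & B]]].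

Definition is_phylo n (H : {set {set 'I_n}}) : bool :=
  [&& [set: 'I_n] \in H, [forall i : 'I_n, [set i] \in H],
      set0 \notin H, laminar H &
      [forall A in H, (1 < #|A|)%N ==>
         [exists B in H, exists C in H,
            [&& B :|: C == A, [disjoint B & C], B != set0 & C != set0]]]].

Definition phylo_trees n : {set {set {set 'I_n}}} := [set H | is_phylo H].

(* depth of a node C = number of arcs from the root = number of proper
   ancestors of C. *)
Definition depth n (H : {set {set 'I_n}}) (C : {set 'I_n}) : nat :=
  #|[set D in H | C \proper D]|.

Definition lca n (H : {set {set 'I_n}}) (i j : 'I_n) : {set 'I_n} :=
  \bigcap_(D in H | (i \in D) && (j \in D)) D.

Definition coph n (H : {set {set 'I_n}}) (i j : 'I_n) : nat := depth H (lca H i j).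

Definition dphi2 (R : rcfType) n (H1 H2 : {set {set 'I_n}}) : R :=
  Num.sqrt (\sum_(i : 'I_n) \sum_(j : 'I_n | (i <= j)%N)
              ((coph H1 i j)%:R - (coph H2 i j)%:R) ^+ 2).

Definition yule (R : rcfType) n (H : {set {set 'I_n}}) : R :=
  (2 ^ (n - 1))%:R / (n`!)%:R * \prod_(C in H | (1 < #|C|)%N) ((#|C| - 1)%:R)^-1.

Definition EY_D2 (R : rcfType) n : R :=
  \sum_(T in phylo_trees n) \sum_(T' in phylo_trees n)
     yule R T * yule R T' * (dphi2 R T T') ^+ 2.

Definition harmonic (R : rcfType) n : R := \sum_(1 <= i < n.+1) (i%:R)^-1.

(* Main.v *)
Require Import Defs.
From HB Require Import structures.
From mathcomp Require Import all_boot all_order all_algebra.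
From mathcomp Require Import ring zify.
Set Implicit Arguments. Unset Strict Implicit. Unset Printing Implicit Defensive.
Import Order.TTheory GRing.Theory Num.Theory.


Definition binsplit n (H : {set {set 'I_n}}) : bool :=
  [forall A in H, (1 < #|A|)%N ==> [exists B in H, exists C in H,
      [&& B :|: C == A, [disjoint B & C], B != set0 & C != set0]]].

Definition tree_on n (S : {set 'I_n}) (H : {set {set 'I_n}}) : bool :=
  [&& S \in H, [forall i in S, [set i] \in H], set0 \notin H,
      [forall A in H, A \subset S], laminar H & binsplit H].

Lemma is_phylo_tree n (H : {set {set 'I_n}}) : is_phylo H = tree_on setT H.
Proof.
rewrite /is_phylo /tree_on; congr (_ && _).
have -> : [forall i : 'I_n, [set i] \in H] = [forall i in [set: 'I_n], [set i] \in H].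
  by apply/forallP/forallP => h i; [rewrite in_setT; exact: h | move: (h i); rewrite in_setT].
congr (_ && (_ && _)).
have -> : [forall A in H, A \subset [set: 'I_n]] = true.
  by apply/forall_inP => A _; exact: subsetT.
by [].
Qed.

Lemma laminarP n (H : {set {set 'I_n}}) :
  reflect (forall A B, A \in H -> B \in H -> [|| A \subset B, B \subset A | [disjoint A & B]])
          (laminar H).
Proof.
apply: (iffP forall_inP) => h.
  by move=> A B hA hB; move/forall_inP: (h A hA); apply.
by move=> A hA; apply/forall_inP => B hB; apply: h.
Qed.

Lemma binsplitP n (H : {set {set 'I_n}}) :
  reflect (forall A, A \in H -> (1 < #|A|)%N -> exists B, exists C,
     [/\ B \in H, C \in H, B :|: C = A, [disjoint B & C] & (B != set0) && (C != set0)])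
   (binsplit H).
Proof.
apply: (iffP forall_inP) => h.
  move=> A hA h1; move/implyP: (h A hA) => /(_ h1) /exists_inP [B hB /exists_inP [C hC]].
  by case/and4P=> /eqP e d b c; exists B, C; split=> //; rewrite b.
move=> A hA; apply/implyP => h1; have [B [C [hB hC e d /andP[b c]]]] := h A hA h1.
by apply/exists_inP; exists B => //; apply/exists_inP; exists C => //; rewrite e eqxx d b c.
Qed.

Record treeP_t n (S : {set 'I_n}) (H : {set {set 'I_n}}) : Prop := TreeP {
  tr_root : S \in H;
  tr_leaf : forall i, i \in S -> [set i] \in H;
  tr_ne : set0 \notin H;
  tr_sub : forall A, A \in H -> A \subset S;
  tr_lam : forall A B, A \in H -> B \in H -> [|| A \subset B, B \subset A | [disjoint A & B]];
  tr_bin : forall A, A \in H -> (1 < #|A|)%N -> exists B, exists C,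
     [/\ B \in H, C \in H, B :|: C = A, [disjoint B & C] & (B != set0) && (C != set0)]
}.

Lemma treeP n (S : {set 'I_n}) H : reflect (treeP_t S H) (tree_on S H).
Proof.
apply: (iffP idP).
  case/and5P=> r /forall_inP l ne /forall_inP s /andP[/laminarP la /binsplitP b].
  by constructor.
case=> r l ne s la b; apply/and5P; split=> //.
- by apply/forall_inP.
- by apply/forall_inP.
- by apply/andP; split; [apply/laminarP|apply/binsplitP].
Qed.


Definition join n (S : {set 'I_n}) (H1 H2 : {set {set 'I_n}}) := S |: (H1 :|: H2).
Definition restr n (H : {set {set 'I_n}}) (A : {set 'I_n}) := [set D in H | D \subset A].

Lemma disjointP n (A B : {set 'I_n}) :
  reflect (forall x, x \in A -> x \in B -> False) [disjoint A & B].
Proof.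
rewrite disjoint_subset; apply: (iffP subsetP) => h x xA.
  by move: (h x xA); rewrite inE => /negP.
by rewrite inE; apply/negP; exact: h.
Qed.

Lemma disj_sub n (A B C D : {set 'I_n}) : [disjoint A & B] -> C \subset A -> D \subset B -> [disjoint C & D].
Proof.
move=> d sC sD; apply/disjointP => x xC xD.
move/disjointP: d => d; exact: d x (subsetP sC x xC) (subsetP sD x xD).
Qed.

Lemma disj_diff n (A S : {set 'I_n}) : [disjoint A & S :\: A].
Proof. by apply/disjointP => x xA; rewrite inE xA. Qed.

Lemma join_tree n (S A : {set 'I_n}) H1 H2 :
  tree_on A H1 -> tree_on (S :\: A) H2 -> A \proper S -> A != set0 ->
  tree_on S (join S H1 H2).
Proof.
move=> /treeP [r1 l1 n1 s1 la1 b1] /treeP [r2 l2 n2 s2 la2 b2] pAS A0.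
have sAS : A \subset S by exact: proper_sub.
have sub1 D : D \in H1 -> D \subset S by move=> hD; exact: subset_trans (s1 _ hD) sAS.
have sub2 D : D \in H2 -> D \subset S by move=> hD; exact: subset_trans (s2 _ hD) (subsetDl _ _).
have d12 D E : D \in H1 -> E \in H2 -> [disjoint D & E].
  by move=> hD hE; apply: disj_sub (disj_diff A S) (s1 _ hD) (s2 _ hE).
have SA0 : S :\: A != set0.
  case/properP: pAS => _ [x xS xA]; apply/set0Pn; exists x; by rewrite inE xS xA.
apply/treeP; constructor.
- by rewrite /join setU11.
- move=> i iS; rewrite /join !inE; case iA: (i \in A).
    by rewrite l1 ?orbT.
  by rewrite l2 ?orbT // inE iA.
- rewrite /join !inE; apply/negP => /orP[/eqP e|/orP[h|h]].
  + by move/negP: A0; apply; rewrite -subset0 e; exact: sAS.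
  + by rewrite h in n1.
  + by rewrite h in n2.
- by move=> D; rewrite /join !inE => /orP[/eqP->|/orP[]]; [exact: subxx | exact: sub1 | exact: sub2].
- move=> D E; rewrite /join !inE => hD hE.
  case/orP: hD => [/eqP->|/orP[hD|hD]].
    by case/orP: hE => [/eqP->|/orP[hE|hE]]; [rewrite subxx | rewrite (sub1 _ hE) orbT | rewrite (sub2 _ hE) orbT].
  + case/orP: hE => [/eqP->|/orP[hE|hE]]; first by rewrite (sub1 _ hD).
      exact: la1.
    by rewrite d12 ?orbT.
  + case/orP: hE => [/eqP->|/orP[hE|hE]]; first by rewrite (sub2 _ hD).
      by rewrite disjoint_sym d12 ?orbT.
    exact: la2.
- move=> D; rewrite /join !inE => hD h1.
  case/orP: hD => [/eqP->|/orP[hD|hD]].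
  + exists A, (S :\: A); split; rewrite ?inE ?r1 ?r2 ?orbT ?A0 ?SA0 //.
      by apply/setP => x; rewrite !inE; case: (x \in A) (subsetP sAS x) => //= ->.
    exact: disj_diff.
  + have [B [C [hB hC e d nz]]] := b1 D hD h1.
    by exists B, C; split; rewrite ?inE ?hB ?hC ?orbT.
  + have [B [C [hB hC e d nz]]] := b2 D hD h1.
    by exists B, C; split; rewrite ?inE ?hB ?hC ?orbT.
Qed.

Lemma restr_tree n (S A : {set 'I_n}) H : tree_on S H -> A \in H -> tree_on A (restr H A).
Proof.
move=> /treeP [r l n0 s la b] hA; apply/treeP; constructor.
- by rewrite inE hA subxx.
- by move=> i iA; rewrite inE sub1set iA andbT; apply: l; exact: (subsetP (s _ hA)).
- by rewrite inE negb_and n0.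
- by move=> D; rewrite inE => /andP[].
- by move=> D E; rewrite !inE => /andP[hD _] /andP[hE _]; exact: la.
- move=> D; rewrite inE => /andP[hD sD] h1; have [B [C [hB hC e d nz]]] := b D hD h1.
  exists B, C; split; rewrite ?inE ?hB ?hC //.
  + by apply: subset_trans sD; rewrite -e subsetUl.
  + by apply: subset_trans sD; rewrite -e subsetUr.
Qed.

Lemma restr_join1 n (S A : {set 'I_n}) H1 H2 :
  tree_on A H1 -> tree_on (S :\: A) H2 -> A \proper S -> A != set0 ->
  restr (join S H1 H2) A = H1.
Proof.
move=> /treeP [r1 l1 n1 s1 la1 b1] /treeP [r2 l2 n2 s2 la2 b2] pAS A0.
apply/setP => D; rewrite /restr /join !inE.
case hD1: (D \in H1); first by rewrite s1 ?orbT.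
rewrite /=; apply/negP => /andP[/orP[/eqP e|hD2] sDA].
  by move: sDA pAS; rewrite e properE => ->; rewrite andbF.
have sD := s2 _ hD2.
have : D == set0.
  rewrite -subset0; apply/subsetP => x xD.
  by move: (subsetP sD x xD) (subsetP sDA x xD); rewrite inE => /andP[/negP].
by move/eqP => e; move: n2; rewrite -e hD2.
Qed.

Lemma restr_join2 n (S A : {set 'I_n}) H1 H2 :
  tree_on A H1 -> tree_on (S :\: A) H2 -> A \proper S -> A != set0 ->
  restr (join S H1 H2) (S :\: A) = H2.
Proof.
move=> /treeP [r1 l1 n1 s1 la1 b1] /treeP [r2 l2 n2 s2 la2 b2] pAS A0.
apply/setP => D; rewrite /restr /join !inE.
case hD2: (D \in H2); first by rewrite s2 ?orbT.
rewrite orbF /=; apply/negP => /andP[/orP[/eqP e|hD1] sDA].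
  case/set0Pn: A0 => x xA.
  by move: (subsetP sDA x); rewrite e !inE xA (subsetP (proper_sub pAS) x xA) => /(_ isT).
have sD := s1 _ hD1.
have : D == set0.
  rewrite -subset0; apply/subsetP => x xD.
  by move: (subsetP sD x xD) (subsetP sDA x xD); rewrite inE => -> /andP[].
by move/eqP => e; move: n1; rewrite -e hD1.
Qed.

Lemma disj_subD n (S A D : {set 'I_n}) : D \subset S -> [disjoint D & A] -> D \subset S :\: A.
Proof.
move=> sD /disjointP d; apply/subsetP => x xD; rewrite inE (subsetP sD x xD) andbT.
by apply/negP => xA; exact: d x xD xA.
Qed.

Lemma disj_subA n (S A D : {set 'I_n}) : D \subset S -> [disjoint D & S :\: A] -> D \subset A.
Proof.
move=> sD /disjointP d; apply/subsetP => x xD; apply/negPn/negP => xA.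
by apply: (d x xD); rewrite inE xA (subsetP sD x xD).
Qed.

Lemma cover_sub n (S A D : {set 'I_n}) : A \subset D -> S :\: A \subset D -> S \subset D.
Proof.
move=> h1 h2; apply/subsetP => x xS; case xA: (x \in A); first exact: (subsetP h1).
by apply: (subsetP h2); rewrite inE xA.
Qed.

Lemma join_restr n (S A : {set 'I_n}) H :
  tree_on S H -> A \in H -> S :\: A \in H -> A != set0 -> A \proper S ->
  H = join S (restr H A) (restr H (S :\: A)).
Proof.
move=> tH hA hSA A0 pAS; have [r l n0 s la b] := treeP _ _ tH.
apply/setP => D; rewrite /join /restr !inE; apply/idP/idP.
  move=> hD; case: eqP => //= nDS; rewrite hD /=.
  case/or3P: (la D A hD hA) => [->//|sAD|dDA].
    case/or3P: (la D _ hD hSA) => [sD|sD|dD].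
    - case/set0Pn: A0 => x xA; move: (subsetP sD x (subsetP sAD x xA)).
      by rewrite inE xA.
    - by case: nDS; apply/eqP; rewrite eqEsubset s //=; exact: cover_sub sAD sD.
    - by rewrite (disj_subA (s _ hD) dD).
  by rewrite (disj_subD (s _ hD) dDA) orbT.
by case/or3P => [/eqP->//|/andP[]//|/andP[]//].
Qed.

Lemma cond_sub n (S : {set 'I_n}) (H : {set {set 'I_n}}) i (A B : {set 'I_n}) :
  tree_on S H ->
  [&& i \in A, A \proper S, A \in H & S :\: A \in H] ->
  [&& i \in B, B \proper S, B \in H & S :\: B \in H] -> A \subset B.
Proof.
move=> tH /and4P[iA pA hA hSA] /and4P[iB pB hB hSB]; have [r l n0 s la b] := treeP _ _ tH.
case/or3P: (la A B hA hB) => [//|sBA|/disjointP d]; last by case: (d i iA iB).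
case/or3P: (la A _ hA hSB) => [sA|sA|dA].
- by move: (subsetP sA i iA); rewrite inE iB.
- have : S \subset A by exact: cover_sub sBA sA.
  by move: pA; rewrite properE => /andP[_ /negP].
- exact: disj_subA (s _ hA) dA.
Qed.

Lemma child_unique n (S : {set 'I_n}) (H : {set {set 'I_n}}) i :
  tree_on S H -> (1 < #|S|)%N -> i \in S ->
  exists A0 : {set 'I_n}, forall A : {set 'I_n}, ([&& i \in A, A \proper S, A \in H & S :\: A \in H]) = (A == A0).
Proof.
move=> tH h1 iS; have [r l n0 s la b] := treeP _ _ tH.
have key (B C : {set 'I_n}) : B \in H -> C \in H -> B :|: C = S -> [disjoint B & C] -> C != set0 -> i \in B ->
  [&& i \in B, B \proper S, B \in H & S :\: B \in H].
  move=> hB hC e d C0 iB; rewrite iB hB /=.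
  have eC : S :\: B = C.
    apply/setP => x; rewrite -e !inE; case xB: (x \in B); case xC: (x \in C) => //=.
    by move/disjointP: d => d; case: (d x xB xC).
  rewrite eC hC andbT; apply/properP; split; first by rewrite -e subsetUl.
  case/set0Pn: C0 => x xC; exists x; first by rewrite -e inE xC orbT.
  by apply/negP => xB; move/disjointP: d => d; exact: d x xB xC.
have [A0 cA0] : exists A0 : {set 'I_n}, [&& i \in A0, A0 \proper S, A0 \in H & S :\: A0 \in H].
  have [B [C [hB hC e d /andP[B0 C0]]]] := b S r h1.
  case iB: (i \in B); first by exists B; apply: (key B C).
  exists C; apply: (key C B) => //; first by rewrite setUC.
    by rewrite disjoint_sym.
  by move: iS; rewrite -e inE iB.
exists A0 => A; apply/idP/idP.
  move=> cA; rewrite eqEsubset; apply/andP; split; [exact: (cond_sub tH cA cA0) | exact: (cond_sub tH cA0 cA)].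
by move/eqP->.
Qed.



Lemma join_facts n (S A : {set 'I_n}) H1 H2 :
  tree_on A H1 -> tree_on (S :\: A) H2 -> A \proper S -> A != set0 ->
  [/\ S \notin H1, S \notin H2, (forall D, D \in H1 -> D \in H2 -> False), (1 < #|S|)%N
    & #|S :\: A| = #|S| - #|A|].
Proof.
move=> /treeP [r1 l1 n1 s1 la1 b1] /treeP [r2 l2 n2 s2 la2 b2] pAS A0.
split.
- apply/negP => hS; move: (s1 _ hS) pAS; rewrite properE => ->; by rewrite andbF.
- apply/negP => hS; move: (s2 _ hS); case/set0Pn: A0 => x xA /subsetP /(_ x).
  by rewrite inE xA (subsetP (proper_sub pAS) x xA) => /(_ isT).
- move=> D h1 h2; have : D != set0 by apply/negP => /eqP e; move: n1; rewrite -e h1.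
  case/set0Pn => x xD.
  by move: (subsetP (s1 _ h1) x xD) (subsetP (s2 _ h2) x xD); rewrite inE => -> /andP[].
- apply: leq_trans (proper_card pAS); by rewrite ltnS card_gt0.
- by rewrite cardsD (setIidPr (proper_sub pAS)).
Qed.




Local Open Scope ring_scope.


Lemma pair_sum (R : rcfType) n (S A : {set 'I_n}) (F : {set {set 'I_n}} -> R) :
  A \proper S -> A != set0 ->
  \sum_(H1 | tree_on A H1) \sum_(H2 | tree_on (S :\: A) H2) F (join S H1 H2) =
  \sum_(H | [&& tree_on S H, A \in H & S :\: A \in H]) F H.
Proof.
move=> pAS A0.
rewrite pair_big_dep /=.
rewrite (reindex_onto (fun p => join S p.1 p.2) (fun H => (restr H A, restr H (S :\: A)))) /=.
  apply: eq_bigl => [[H1 H2]] /=; apply/idP/idP.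
    case/andP=> t1 t2; rewrite (join_tree t1 t2) //=.
    have [r1 _ _ _ _ _] := treeP _ _ t1; have [r2 _ _ _ _ _] := treeP _ _ t2.
    rewrite /join !inE r1 r2 !orbT /= -/(join S H1 H2) (restr_join1 t1 t2) // (restr_join2 t1 t2) //.
  case/andP=> /and3P[tH hA hSA] /eqP [e1 e2].
  by move: (restr_tree tH hA) (restr_tree tH hSA); rewrite e1 e2 => -> ->.
move=> H /and3P[tH hA hSA] /=.
by rewrite -join_restr.
Qed.

Lemma tree_sum (R : rcfType) n (S : {set 'I_n}) (i : 'I_n) (F : {set {set 'I_n}} -> R) :
  i \in S -> (1 < #|S|)%N ->
  \sum_(H | tree_on S H) F H =
  \sum_(A : {set 'I_n} | (i \in A) && (A \proper S))
     \sum_(H1 | tree_on A H1) \sum_(H2 | tree_on (S :\: A) H2) F (join S H1 H2).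
Proof.
move=> iS h1.
transitivity (\sum_(A : {set 'I_n} | (i \in A) && (A \proper S))
                \sum_(H | [&& tree_on S H, A \in H & S :\: A \in H]) F H); last first.
  apply: eq_bigr => A /andP[iA pAS]; rewrite pair_sum //.
  by apply/set0Pn; exists i.
rewrite (exchange_big_dep (tree_on S)) /=; last by move=> A H _ /and3P[].
apply: eq_bigr => H tH.
have [A0 hA0] := child_unique tH h1 iS.
rewrite (big_pred1 A0) // => A /=; rewrite -hA0.
by rewrite tH /=; case: (i \in A); case: (A \proper S); case: (A \in H); case: (S :\: A \in H).
Qed.

Definition w (R : rcfType) n (S : {set 'I_n}) (H : {set {set 'I_n}}) : R :=
  (2 ^ (#|S| - 1))%:R / (#|S|`!)%:R * \prod_(C in H | (1 < #|C|)%N) ((#|C| - 1)%:R)^-1.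

Definition kappa (R : rcfType) (a s : nat) : R :=
  2 * (a`!)%:R * ((s - a)`!)%:R / ((s`!)%:R * (s - 1)%:R).

Lemma fact_neq0 (R : rcfType) k : (k`!)%:R != 0 :> R.
Proof. by rewrite pnatr_eq0 -lt0n fact_gt0. Qed.

Lemma w_join (R : rcfType) n (S A : {set 'I_n}) H1 H2 :
  tree_on A H1 -> tree_on (S :\: A) H2 -> A \proper S -> A != set0 ->
  w R S (join S H1 H2) = kappa R #|A| #|S| * w R A H1 * w R (S :\: A) H2.
Proof.
move=> t1 t2 pAS A0; have [nS1 nS2 d12 h1 cD] := join_facts t1 t2 pAS A0.
set f := fun C : {set 'I_n} => ((#|C| - 1)%:R : R)^-1.
have eP : \prod_(C in join S H1 H2 | (1 < #|C|)%N) f C =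
          f S * ((\prod_(C in H1 | (1 < #|C|)%N) f C) * (\prod_(C in H2 | (1 < #|C|)%N) f C)).
  rewrite /join big_mkcondr big_setU1 /=; last by rewrite inE negb_or nS1 nS2.
  rewrite h1; congr (_ * _).
  rewrite (eq_bigl [predU H1 & H2]); last by move=> C; rewrite !inE.
  rewrite bigU /=; first by rewrite -!big_mkcondr.
  rewrite disjoint_subset; apply/subsetP => D hD; rewrite inE; apply/negP => hD2.
  exact: d12 hD hD2.
rewrite /w eP cD /f /kappa.
set a := #|A|; set s := #|S|.
have a1 : (1 <= a)%N by rewrite card_gt0.
have hlt : (a < s)%N by exact: proper_card.
have e2 : (2 ^ (s - 1) = 2 * 2 ^ (a - 1) * 2 ^ (s - a - 1))%N.
  by rewrite -expnS -expnD; apply: congr1; lia.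
rewrite e2 !natrM.
have hs1 : (s - 1)%:R != 0 :> R by rewrite pnatr_eq0; lia.
have := fact_neq0 R s; have := fact_neq0 R a; have := fact_neq0 R (s - a).
move=> f1 f2 f3; field.
by rewrite f1 f2 f3 hs1.
Qed.

Lemma depth_root n (S : {set 'I_n}) H : tree_on S H -> depth H S = 0%N.
Proof.
move=> /treeP [r l n0 s la b]; apply/eqP; rewrite cards_eq0; apply/eqP/setP => D.
rewrite !inE; apply/negP => /andP[hD pD].
by move: (s _ hD) pD; rewrite properE => ->; rewrite andbF.
Qed.

Lemma depth_join1 n (S A X : {set 'I_n}) H1 H2 :
  tree_on A H1 -> tree_on (S :\: A) H2 -> A \proper S -> A != set0 ->
  X != set0 -> X \subset A ->
  depth (join S H1 H2) X = (depth H1 X).+1.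
Proof.
move=> t1 t2 pAS A0 X0 sXA; have [nS1 nS2 d12 h1 cD] := join_facts t1 t2 pAS A0.
have [_ _ _ s2 _ _] := treeP _ _ t2.
rewrite /depth.
have -> : [set D in join S H1 H2 | X \proper D] = S |: [set D in H1 | X \proper D].
  apply/setP => D; rewrite /join !inE.
  case: eqP => [->|_] /=; first by rewrite (sub_proper_trans sXA pAS) ?orbT ?andbT.
  case hD1: (D \in H1) => //=; case hD2: (D \in H2) => //=.
  apply/negP => /proper_sub sXD; case/set0Pn: X0 => x xX.
  move: (subsetP (s2 _ hD2) x (subsetP sXD x xX)); by rewrite inE (subsetP sXA x xX).
by rewrite cardsU1 inE (negbTE nS1) andFb.
Qed.

Lemma lca_mem n (H : {set {set 'I_n}}) i j : i \in lca H i j.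
Proof. by apply/bigcapP => D /andP[_ /andP[]]. Qed.

Lemma lca_sub n (H : {set {set 'I_n}}) i j D : D \in H -> i \in D -> j \in D -> lca H i j \subset D.
Proof.
move=> hD iD jD; apply/subsetP => x /bigcapP; apply; by rewrite hD iD jD.
Qed.

Lemma lca_join1 n (S A : {set 'I_n}) H1 H2 i j :
  tree_on A H1 -> tree_on (S :\: A) H2 -> A \proper S -> A != set0 ->
  i \in A -> j \in A -> lca (join S H1 H2) i j = lca H1 i j.
Proof.
move=> t1 t2 pAS A0 iA jA.
have [r1 _ _ _ _ _] := treeP _ _ t1; have [_ _ _ s2 _ _] := treeP _ _ t2.
apply/setP => x; apply/bigcapP/bigcapP => h D.
  by move=> /andP[hD c]; apply: h; rewrite /join !inE hD orbT c.
rewrite /join !inE => /andP[/orP[/eqP->|/orP[hD|hD]] /andP[iD jD]].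
- apply: (subsetP (proper_sub pAS)); apply: h; by rewrite r1 iA jA.
- by apply: h; rewrite hD iD jD.
- by move: (subsetP (s2 _ hD) i iD); rewrite inE iA.
Qed.

Lemma lca_join2 n (S A : {set 'I_n}) H1 H2 i j :
  tree_on A H1 -> tree_on (S :\: A) H2 -> A \proper S -> A != set0 ->
  i \in A -> j \in S :\: A -> lca (join S H1 H2) i j = S.
Proof.
move=> t1 t2 pAS A0 iA jSA.
have [_ _ _ s1 _ _] := treeP _ _ t1; have [_ _ _ s2 _ _] := treeP _ _ t2.
have iS : i \in S := subsetP (proper_sub pAS) i iA.
have jS : j \in S by move: jSA; rewrite inE => /andP[].
apply/setP => x; apply/bigcapP/idP => [h|xS D].
  by apply: h; rewrite /join !inE eqxx iS jS.
rewrite /join !inE => /andP[/orP[/eqP->//|/orP[hD|hD]] /andP[iD jD]].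
- by move: (subsetP (s1 _ hD) j jD) jSA; rewrite inE => ->.
- by move: (subsetP (s2 _ hD) i iD); rewrite inE iA.
Qed.

Lemma coph_join1 n (S A : {set 'I_n}) H1 H2 i j :
  tree_on A H1 -> tree_on (S :\: A) H2 -> A \proper S -> A != set0 ->
  i \in A -> j \in A -> coph (join S H1 H2) i j = (coph H1 i j).+1.
Proof.
move=> t1 t2 pAS A0 iA jA; rewrite /coph (lca_join1 t1 t2) //.
have [r1 _ _ _ _ _] := treeP _ _ t1.
apply: (depth_join1 t1 t2) => //; first by apply/set0Pn; exists i; exact: lca_mem.
exact: lca_sub.
Qed.

Lemma coph_join2 n (S A : {set 'I_n}) H1 H2 i j :
  tree_on A H1 -> tree_on (S :\: A) H2 -> A \proper S -> A != set0 ->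
  i \in A -> j \in S :\: A -> coph (join S H1 H2) i j = 0%N.
Proof.
move=> t1 t2 pAS A0 iA jA; rewrite /coph (lca_join2 t1 t2) //.
exact: depth_root (join_tree t1 t2 pAS A0).
Qed.


Lemma sum_const_set (R : rcfType) (T : finType) (P : pred T) (c : R) :
  \sum_(x | P x) c = c *+ #|[set x | P x]|.
Proof.
rewrite -sumr_const; apply: eq_bigl => x; by rewrite inE.
Qed.

Lemma sum_by_card (R : rcfType) n (Y : {set 'I_n}) (g : nat -> R) :
  \sum_(B : {set 'I_n} | (B \subset Y) && (B != Y)) g #|B| =
  \sum_(k < #|Y|) 'C(#|Y|, k)%:R * g k.
Proof.
rewrite -(big_mkord xpredT (fun k => 'C(#|Y|, k)%:R * g k)).
transitivity (\sum_(B : {set 'I_n} | (B \subset Y) && (B != Y))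
                 \sum_(0 <= k < #|Y| | k == #|B|) g k).
  apply: eq_bigr => B /andP[sBY nBY].
  rewrite big_nat1_eq /=.
  have : (#|B| < #|Y|)%N by apply: proper_card; rewrite properEneq nBY sBY.
  by move=> ->.
rewrite (exchange_big_dep xpredT) //=.
apply: eq_big_nat => k /andP[_ hk].
rewrite sum_const_set mulr_natl; congr (_ *+ _).
rewrite -cards_draws; apply: eq_card => B; rewrite !inE (eq_sym k).
case sBY: (B \subset Y) => //=; case eBk: (#|B| == k); rewrite ?andbF ?andbT //.
apply/negP => /eqP eBY; move/eqP: eBk; rewrite eBY => e; move: hk; by rewrite e ltnn.
Qed.

Lemma setUDX n (X A : {set 'I_n}) : X \subset A -> X :|: (A :\: X) = A.
Proof.
move=> sXA; apply/setP => x; rewrite !inE; case xX: (x \in X) => //=.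
by rewrite (subsetP sXA x xX).
Qed.

Lemma count_sum (R : rcfType) n (S X : {set 'I_n}) (G : nat -> R) : X \subset S ->
  \sum_(A : {set 'I_n} | (X \subset A) && (A \proper S)) G #|A| =
  \sum_(k < #|S| - #|X|) 'C(#|S| - #|X|, k)%:R * G (k + #|X|)%N.
Proof.
move=> sXS.
rewrite (reindex_onto (fun B => X :|: B) (fun A => A :\: X)) /=; last first.
  by move=> A /andP[sXA _]; exact: setUDX.
have eS : (#|S| - #|X| = #|S :\: X|)%N by rewrite cardsD (setIidPr sXS).
rewrite eS -(sum_by_card (S :\: X) (fun m => G (m + #|X|)%N)).
apply: eq_big => B.
  rewrite subsetUl /= properEneq subUset sXS /= setDUl setDv set0U subsetD.
  case dBX: [disjoint B & X]; last first.
    rewrite !andbF /=; apply/negbTE; rewrite negb_and; apply/orP; right.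
    by apply/negP => /eqP e; have := introT setDidPl e; rewrite dBX.
  have -> : B :\: X = B by apply/setDidPl.
  rewrite eqxx !andbT; case sBS: (B \subset S); rewrite ?andbF //= ?andbT.
  apply/idP/idP; apply: contra => /eqP e; apply/eqP.
    by rewrite e setUDX.
  rewrite -e setDUl setDv set0U; symmetry; exact/setDidPl.
move=> /andP[_ /eqP e]; move: e; rewrite setDUl setDv set0U => e.
have dBX := introT setDidPl e; congr G.
rewrite cardsU addnC setIC.
by rewrite (disjoint_setI0 dBX) cards0 subn0.
Qed.


Definition harm2 (R : rcfType) n : R := \sum_(1 <= i < n.+1) ((i%:R)^-2).

Definition E1 (R : rcfType) s : R := 2 * harmonic R s - 2.
Definition E2 (R : rcfType) s : R := 6 - 6 * harmonic R s + 4 * harmonic R s ^+ 2 - 4 * harm2 R s.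
Definition F1 (R : rcfType) s : R := 2 + (4 - 4 * harmonic R s) / (s%:R - 1).
Definition F2 (R : rcfType) s : R :=
  10 + (4 - 4 * harmonic R s - 8 * harmonic R s ^+ 2 + 8 * harm2 R s) / (s%:R - 1).

Lemma harmS (R : rcfType) m : harmonic R m.+1 = harmonic R m + (m%:R + 1)^-1.
Proof. by rewrite /harmonic big_nat_recr //= natr1. Qed.

Lemma harm2S (R : rcfType) m : harm2 R m.+1 = harm2 R m + (m%:R + 1)^-2.
Proof. by rewrite /harm2 big_nat_recr //= natr1. Qed.

Lemma harm0 (R : rcfType) : harmonic R 0 = 0.
Proof. by rewrite /harmonic big_geq. Qed.
Lemma harm20 (R : rcfType) : harm2 R 0 = 0.
Proof. by rewrite /harm2 big_geq. Qed.

Lemma natp1_neq0 (R : rcfType) m : m%:R + 1 != 0 :> R.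
Proof. by rewrite natr1 pnatr_eq0. Qed.
Lemma natp2_neq0 (R : rcfType) m : m%:R + 1 + 1 != 0 :> R.
Proof. by rewrite !natr1 pnatr_eq0. Qed.

Lemma sumE1 (R : rcfType) m :
  \sum_(k < m) (2 * (k%:R + 1)) * (1 + E1 R k.+1) = (m%:R + 1) * m%:R * E1 R m.+1.
Proof.
elim: m => [|m IH]; first by rewrite big_ord0 mulr0 mul0r.
rewrite big_ord_recr /= IH /E1 !harmS -!natr1.
have h1 := natp1_neq0 R m; have h2 := natp2_neq0 R m.
field.
by rewrite h1 h2.
Qed.

Lemma F1S (R : rcfType) m : F1 R m.+2 = 2 + (4 - 4 * harmonic R m.+2) / (m%:R + 1).
Proof. by rewrite /F1 -[m.+2]addn1 natrD addrK natr1. Qed.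
Lemma F2S (R : rcfType) m : F2 R m.+2 =
  10 + (4 - 4 * harmonic R m.+2 - 8 * harmonic R m.+2 ^+ 2 + 8 * harm2 R m.+2) / (m%:R + 1).
Proof. by rewrite /F2 -[m.+2]addn1 natrD addrK natr1. Qed.

Lemma sumE2 (R : rcfType) m :
  \sum_(k < m) (2 * (k%:R + 1)) * (1 + 2 * E1 R k.+1 + E2 R k.+1) = (m%:R + 1) * m%:R * E2 R m.+1.
Proof.
elim: m => [|m IH]; first by rewrite big_ord0 mulr0 mul0r.
rewrite big_ord_recr /= IH /E1 /E2 !harmS !harm2S -!natr1.
have h1 := natp1_neq0 R m; have h2 := natp2_neq0 R m.
field.
by rewrite h1 h2.
Qed.

Lemma sumF1 (R : rcfType) m :
  \sum_(k < m) (2 * (k%:R + 2) * (k%:R + 1)) * (1 + F1 R k.+2) =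
  (m%:R + 2) * (m%:R + 1) ^+ 2 * F1 R m.+2.
Proof.
elim: m => [|m IH].
  by rewrite big_ord0 F1S !harmS harm0; field.
rewrite big_ord_recr /= IH !F1S !harmS -!natr1.
have h1 := natp1_neq0 R m; have h2 := natp2_neq0 R m; have h3 := natp2_neq0 R m.+1.
rewrite -!natr1 in h3.
field.
by rewrite h1 h2 h3.
Qed.

Lemma sumF2 (R : rcfType) m :
  \sum_(k < m) (2 * (k%:R + 2) * (k%:R + 1)) * (1 + 2 * F1 R k.+2 + F2 R k.+2) =
  (m%:R + 2) * (m%:R + 1) ^+ 2 * F2 R m.+2.
Proof.
elim: m => [|m IH].
  by rewrite big_ord0 F2S !harmS !harm2S harm0 harm20; field.
rewrite big_ord_recr /= IH !F1S !F2S !harmS !harm2S -!natr1.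
have h1 := natp1_neq0 R m; have h2 := natp2_neq0 R m; have h3 := natp2_neq0 R m.+1.
rewrite -!natr1 in h3.
field.
by rewrite h1 h2 h3.
Qed.

Lemma sumZ (R : rcfType) m : \sum_(k < m) 2 * (k%:R + 1) = (m%:R + 1) * m%:R :> R.
Proof.
elim: m => [|m IH]; first by rewrite big_ord0 mulr0.
rewrite big_ord_recr /= IH -!natr1; ring.
Qed.


Lemma binR (R : rcfType) n k : (k <= n)%N ->
  'C(n, k)%:R = (n`!)%:R / ((k`!)%:R * ((n - k)`!)%:R) :> R.
Proof.
move=> hk; rewrite -(bin_fact hk) !natrM.
have := fact_neq0 R k; have := fact_neq0 R (n - k) => f1 f2.
by field; rewrite f1 f2.
Qed.

Lemma kap1 (R : rcfType) m k : (k < m.+1)%N ->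
  'C(m.+1, k)%:R * kappa R (k + 1) m.+2 = 2 * (k%:R + 1) / ((m%:R + 2) * (m%:R + 1)).
Proof.
move=> hk; rewrite binR ?(ltnW hk) // /kappa addn1.
have -> : (m.+2 - k.+1 = m.+1 - k)%N by lia.
have -> : (m.+2 - 1 = m.+1)%N by lia.
rewrite (factS m.+1) (factS k) !natrM.
have f1 := fact_neq0 R k; have f2 := fact_neq0 R (m.+1 - k); have f3 := fact_neq0 R m.+1.
move: f1 f2 f3.
set a := (k`!)%:R; set b := ((m.+1 - k)`!)%:R; set c := (m.+1`!)%:R => f1 f2 f3.
rewrite -!natr1.
have h1 : m%:R + 1 != 0 :> R by rewrite natr1 pnatr_eq0.
have h2 : m%:R + 1 + 1 != 0 :> R by rewrite !natr1 pnatr_eq0.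
field.
apply/and5P; split; [exact: h1 | by rewrite -natrD pnatr_eq0 addn2 | exact: (fact_neq0 R m) | exact: f2 | exact: f1].
Qed.

Lemma kap2 (R : rcfType) m k : (k < m)%N ->
  'C(m, k)%:R * kappa R (k + 2) m.+2 = 2 * (k%:R + 2) * (k%:R + 1) / ((m%:R + 2) * (m%:R + 1) ^+ 2).
Proof.
move=> hk; rewrite binR ?(ltnW hk) // /kappa addn2.
have -> : (m.+2 - k.+2 = m - k)%N by lia.
have -> : (m.+2 - 1 = m.+1)%N by lia.
rewrite (factS m.+1) (factS m) (factS k.+1) (factS k) !natrM.
have f1 := fact_neq0 R k; have f2 := fact_neq0 R (m - k); have f3 := fact_neq0 R m.
move: f1 f2 f3.
set a := (k`!)%:R; set b := ((m - k)`!)%:R; set c := (m`!)%:R => f1 f2 f3.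
rewrite -!natr1.
have h1 : m%:R + 1 != 0 :> R by rewrite natr1 pnatr_eq0.
have h2 : m%:R + 1 + 1 != 0 :> R by rewrite !natr1 pnatr_eq0.
field.
apply/and5P; split; [exact: h1 | by rewrite -natrD pnatr_eq0 addn2 | exact: f3 | exact: f2 | exact: f1].
Qed.


Lemma sum1 (R : rcfType) n (S : {set 'I_n}) i m (G : nat -> R) : i \in S -> #|S| = m.+2 ->
  \sum_(A : {set 'I_n} | (i \in A) && (A \proper S)) kappa R #|A| #|S| * G #|A| =
  \sum_(k < m.+1) 2 * (k%:R + 1) / ((m%:R + 2) * (m%:R + 1)) * G k.+1.
Proof.
move=> iS cS.
rewrite (eq_bigl (fun A : {set 'I_n} => ([set i] \subset A) && (A \proper S))); last by move=> A; rewrite sub1set.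
rewrite (count_sum (fun a => kappa R a #|S| * G a)) ?sub1set // cards1 cS.
have -> : (m.+2 - 1 = m.+1)%N by lia.
apply: eq_bigr => k _; rewrite mulrA kap1 // addn1 //.
Qed.

Lemma sum2 (R : rcfType) n (S : {set 'I_n}) i j m (G : nat -> R) : i \in S -> j \in S -> i != j ->
  #|S| = m.+2 ->
  \sum_(A : {set 'I_n} | ((i \in A) && (A \proper S)) && (j \in A)) kappa R #|A| #|S| * G #|A| =
  \sum_(k < m) 2 * (k%:R + 2) * (k%:R + 1) / ((m%:R + 2) * (m%:R + 1) ^+ 2) * G k.+2.
Proof.
move=> iS jS ij cS.
rewrite (eq_bigl (fun A : {set 'I_n} => ([set i; j] \subset A) && (A \proper S))); last first.
  by move=> A; rewrite subUset !sub1set; case: (i \in A); case: (j \in A); case: (A \proper S).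
rewrite (count_sum (fun a => kappa R a #|S| * G a)); last by rewrite subUset !sub1set iS jS.
rewrite cards2 ij cS.
have -> : (m.+2 - 2 = m)%N by lia.
apply: eq_bigr => k _; rewrite mulrA kap2 // addn2 //.
Qed.


Definition Zs (R : rcfType) n (S : {set 'I_n}) : R := \sum_(H | tree_on S H) w R S H.
Definition M1 (R : rcfType) n (S : {set 'I_n}) i j : R :=
  \sum_(H | tree_on S H) w R S H * (coph H i j)%:R.
Definition M2 (R : rcfType) n (S : {set 'I_n}) i j : R :=
  \sum_(H | tree_on S H) w R S H * (coph H i j)%:R ^+ 2.

Lemma step_sum (R : rcfType) n (S : {set 'I_n}) i (g : {set {set 'I_n}} -> R) :
  i \in S -> (1 < #|S|)%N ->
  \sum_(H | tree_on S H) w R S H * g H =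
  \sum_(A : {set 'I_n} | (i \in A) && (A \proper S)) kappa R #|A| #|S| *
     \sum_(H1 | tree_on A H1) \sum_(H2 | tree_on (S :\: A) H2)
        w R A H1 * w R (S :\: A) H2 * g (join S H1 H2).
Proof.
move=> iS h1; rewrite (@tree_sum R n S i (fun H => w R S H * g H) iS h1).
apply: eq_bigr => A /andP[iA pAS].
have A0 : A != set0 by apply/set0Pn; exists i.
rewrite big_distrr; apply: eq_bigr => H1 t1; rewrite big_distrr; apply: eq_bigr => H2 t2.
rewrite /= (@w_join R n S A H1 H2 t1 t2 pAS A0).
set a := w R A H1; set b := w R (S :\: A) H2; set k := kappa R _ _.
by rewrite !mulrA.
Qed.

Lemma inner_prod (R : rcfType) (T : finType) (P1 P2 : pred T) (f1 g1 f2 : T -> R) :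
  \sum_(x | P1 x) \sum_(y | P2 y) f1 x * f2 y * g1 x =
  (\sum_(x | P1 x) f1 x * g1 x) * \sum_(y | P2 y) f2 y.
Proof.
rewrite big_distrl; apply: eq_bigr => x _; rewrite big_distrr; apply: eq_bigr => y _.
by rewrite mulrAC.
Qed.

Lemma tree_single n (x : 'I_n) H : tree_on [set x] H = (H == [set [set x]]).
Proof.
apply/idP/idP.
  move/treeP => [r l n0 s la b]; apply/eqP/setP => D; rewrite inE.
  apply/idP/idP; last by move/eqP->.
  move=> hD; move: (s _ hD); rewrite subset1 => /orP[//|/eqP e].
  by move: n0; rewrite -e hD.
move/eqP->; apply/treeP; constructor.
- by rewrite inE.
- by move=> i; rewrite !inE => /eqP->.
- by rewrite inE eq_sym; apply/negP => /eqP e; move: (set11 x); rewrite e inE.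
- by move=> A; rewrite inE => /eqP->.
- by move=> A B; rewrite !inE => /eqP-> /eqP->; rewrite subxx.
- by move=> A; rewrite inE => /eqP->; rewrite cards1.
Qed.

Lemma coph_single n (x : 'I_n) : coph [set [set x]] x x = 0%N.
Proof.
have t : tree_on [set x] [set [set x]] by rewrite tree_single.
rewrite /coph.
have -> : lca [set [set x]] x x = [set x].
  apply/eqP; rewrite eqEsubset lca_sub ?inE ?set11 //= sub1set; exact: lca_mem.
exact: depth_root t.
Qed.

Lemma w_single (R : rcfType) n (x : 'I_n) : w R [set x] [set [set x]] = 1.
Proof.
rewrite /w big1 ?cards1 /=; last by move=> C /andP[]; rewrite inE => /eqP->; rewrite cards1.
by rewrite divr1 mulr1.
Qed.

Lemma E1_1 (R : rcfType) : E1 R 1 = 0.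
Proof. by rewrite /E1 harmS harm0 add0r add0r invr1 mulr1 subrr. Qed.
Lemma E2_1 (R : rcfType) : E2 R 1 = 0.
Proof.
by rewrite /E2 harmS harm2S harm0 harm20; field.
Qed.


Lemma step_coph (R : rcfType) n (S : {set 'I_n}) i j (g : nat -> R) :
  i \in S -> j \in S -> (1 < #|S|)%N ->
  \sum_(H | tree_on S H) w R S H * g (coph H i j) =
  \sum_(A : {set 'I_n} | (i \in A) && (A \proper S)) kappa R #|A| #|S| *
     (if j \in A then (\sum_(H1 | tree_on A H1) w R A H1 * g (coph H1 i j).+1) * Zs R (S :\: A)
      else Zs R A * Zs R (S :\: A) * g 0%N).
Proof.
move=> iS jS h1.
rewrite (step_sum (fun H => g (coph H i j)) iS h1).
apply: eq_bigr => A /andP[iA pAS]; congr (_ * _).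
have A0 : A != set0 by apply/set0Pn; exists i.
case jA: (j \in A).
  transitivity (\sum_(H1 | tree_on A H1) \sum_(H2 | tree_on (S :\: A) H2)
                   w R A H1 * w R (S :\: A) H2 * g (coph H1 i j).+1).
    apply: eq_bigr => H1 t1; apply: eq_bigr => H2 t2.
    by rewrite (coph_join1 t1 t2).
  exact: (inner_prod (tree_on A) (tree_on (S :\: A)) (w R A) (fun H1 => g (coph H1 i j).+1) (w R (S :\: A))).
have jSA : j \in S :\: A by rewrite inE jA jS.
transitivity (\sum_(H1 | tree_on A H1) \sum_(H2 | tree_on (S :\: A) H2)
                 w R A H1 * w R (S :\: A) H2 * g 0%N).
  apply: eq_bigr => H1 t1; apply: eq_bigr => H2 t2.
  by rewrite (coph_join2 t1 t2).
rewrite (inner_prod (tree_on A) (tree_on (S :\: A)) (w R A) (fun _ => g 0%N) (w R (S :\: A))).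
by rewrite /Zs -big_distrl /= mulrAC.
Qed.


Definition good (R : rcfType) n (S : {set 'I_n}) : Prop :=
  [/\ Zs R S = 1,
      forall i, i \in S -> M1 R S i i = E1 R #|S| /\ M2 R S i i = E2 R #|S|
    & forall i j, i \in S -> j \in S -> i != j -> M1 R S i j = F1 R #|S| /\ M2 R S i j = F2 R #|S|].

Lemma sum_single (R : rcfType) n (x : 'I_n) (Fh : {set {set 'I_n}} -> R) :
  \sum_(H | tree_on [set x] H) Fh H = Fh [set [set x]].
Proof. by apply: big_pred1 => H; rewrite /= tree_single. Qed.

Lemma good1 (R : rcfType) n (x : 'I_n) : good R [set x].
Proof.
rewrite /good cards1; split.
- by rewrite /Zs sum_single w_single.
- move=> i; rewrite inE => /eqP->; rewrite /M1 /M2 !sum_single w_single coph_single E1_1 E2_1 mul1r.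
  by rewrite mul1r expr2 mulr0.
by move=> i j; rewrite !inE => /eqP-> /eqP->; rewrite eqxx.
Qed.

Lemma sum_div (R : rcfType) m (Fk G : nat -> R) (Dn : R) :
  \sum_(k < m) Fk k / Dn * G k = (\sum_(k < m) Fk k * G k) / Dn.
Proof. by rewrite mulr_suml; apply: eq_bigr => k _; rewrite mulrAC. Qed.

Lemma all_good (R : rcfType) n m : forall S : {set 'I_n}, #|S| = m.+1 -> good R S.
Proof.
elim/ltn_ind: m => m IH S cS.
case: m IH cS => [|m] IH cS.
  have /cards1P [x ->] : #|S| == 1%N by rewrite cS.
  exact: good1.
have IHS (T : {set 'I_n}) : T != set0 -> (#|T| < #|S|)%N -> good R T.
  move=> T0 lt; have : (0 < #|T|)%N by rewrite card_gt0.
  case cT: #|T| => [//|t] _; apply: (IH t) => //.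
  by rewrite -ltnS -cT -cS.
have parts (A : {set 'I_n}) k : k \in A -> A \proper S -> good R A /\ good R (S :\: A).
  move=> kA pAS; have A0 : A != set0 by apply/set0Pn; exists k.
  split; first by apply: IHS => //; exact: proper_card.
  have sAS := proper_sub pAS.
  apply: IHS.
    by case/properP: pAS => _ [x xS xA]; apply/set0Pn; exists x; rewrite inE xA xS.
  rewrite cardsD (setIidPr sAS); have : (0 < #|A|)%N by rewrite card_gt0.
  have : (#|A| <= #|S|)%N by exact: subset_leq_card.
  lia.
have h1 : (1 < #|S|)%N by rewrite cS.
have [i0 i0S] : exists i0, i0 \in S by apply/set0Pn; rewrite -card_gt0 cS.
have hD1 : (m%:R + 1 : R) != 0 by exact: natp1_neq0.
have hD2 : (m%:R + 2 : R) != 0 by rewrite -natrD pnatr_eq0 addn2.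
split.
-
  have eZ : Zs R S = \sum_(H | tree_on S H) w R S H * (fun _ : nat => 1 : R) (coph H i0 i0).
    by apply: eq_bigr => H _; rewrite mulr1.
  rewrite eZ (step_coph (fun _ : nat => 1 : R) i0S i0S h1).
  transitivity (\sum_(A : {set 'I_n} | (i0 \in A) && (A \proper S)) kappa R #|A| #|S| * (fun _ => 1 : R) #|A|).
    apply: eq_bigr => A /andP[iA pAS]; rewrite iA.
    have [[ZA _ _] [ZSA _ _]] := parts A i0 iA pAS.
    rewrite (eq_bigr (w R A)); last by move=> H _; rewrite mulr1.
    by rewrite -/(Zs R A) ZA ZSA mulr1.
  rewrite (@sum1 R n S i0 m (fun _ => 1 : R) i0S cS).
  rewrite (@sum_div R m.+1 (fun k => 2 * (k%:R + 1)) (fun k => 1) ((m%:R + 2) * (m%:R + 1))).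
  rewrite (eq_bigr (fun k : 'I_m.+1 => 2 * ((k : nat)%:R + 1))); last by move=> k _; rewrite mulr1.
  rewrite sumZ -natr1; field.
  by rewrite hD1 hD2.
- move=> i iS.
  have e1 : M1 R S i i = \sum_(A : {set 'I_n} | (i \in A) && (A \proper S))
                            kappa R #|A| #|S| * (fun a => E1 R a + 1) #|A|.
    rewrite /M1 (step_coph (fun c : nat => c%:R : R) iS iS h1).
    apply: eq_bigr => A /andP[iA pAS]; rewrite iA.
    have [[ZA EA _] [ZSA _ _]] := parts A i iA pAS.
    have [EA1 _] := EA i iA.
    rewrite ZSA mulr1; congr (_ * _).
    transitivity (M1 R A i i + Zs R A); last by rewrite EA1 ZA.
    by rewrite /M1 /Zs -big_split; apply: eq_bigr => H _ /=; rewrite -natr1 mulrDr mulr1.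
  have e2 : M2 R S i i = \sum_(A : {set 'I_n} | (i \in A) && (A \proper S))
                            kappa R #|A| #|S| * (fun a => E2 R a + 2 * E1 R a + 1) #|A|.
    rewrite /M2 (step_coph (fun c : nat => c%:R ^+ 2 : R) iS iS h1).
    apply: eq_bigr => A /andP[iA pAS]; rewrite iA.
    have [[ZA EA _] [ZSA _ _]] := parts A i iA pAS.
    have [EA1 EA2] := EA i iA.
    rewrite ZSA mulr1; congr (_ * _).
    transitivity (M2 R A i i + 2 * M1 R A i i + Zs R A); last by rewrite EA1 EA2 ZA.
    rewrite /M2 /M1 /Zs mulr_sumr -!big_split; apply: eq_bigr => H _ /=.
    by rewrite -natr1; ring.
  split.
    rewrite e1 (@sum1 R n S i m (fun a => E1 R a + 1) iS cS).
    rewrite (@sum_div R m.+1 (fun k => 2 * (k%:R + 1)) (fun k => E1 R k.+1 + 1) ((m%:R + 2) * (m%:R + 1))).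
    rewrite (eq_bigr (fun k : 'I_m.+1 => 2 * ((k : nat)%:R + 1) * (1 + E1 R (k : nat).+1))); last first.
      by move=> k _; rewrite (addrC (E1 R _)).
    rewrite sumE1 cS -!natr1; field.
    by rewrite hD1 hD2.
  rewrite e2 (@sum1 R n S i m (fun a => E2 R a + 2 * E1 R a + 1) iS cS).
  rewrite (@sum_div R m.+1 (fun k => 2 * (k%:R + 1)) (fun k => E2 R k.+1 + 2 * E1 R k.+1 + 1)
             ((m%:R + 2) * (m%:R + 1))).
  rewrite (eq_bigr (fun k : 'I_m.+1 => 2 * ((k : nat)%:R + 1) * (1 + 2 * E1 R (k : nat).+1 + E2 R (k : nat).+1)));
    last by move=> k _; congr (_ * _); ring.
  rewrite sumE2 cS -!natr1; field.
  by rewrite hD1 hD2.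
- move=> i j iS jS ij.
  have e1 : M1 R S i j = \sum_(A : {set 'I_n} | ((i \in A) && (A \proper S)) && (j \in A))
                            kappa R #|A| #|S| * (fun a => F1 R a + 1) #|A|.
    rewrite /M1 (step_coph (fun c : nat => c%:R : R) iS jS h1) [RHS]big_mkcondr.
    apply: eq_bigr => A /andP[iA pAS]; case jA: (j \in A); last by rewrite /= mulr0n !mulr0.
    have [[ZA _ FA] [ZSA _ _]] := parts A i iA pAS.
    have [FA1 _] := FA i j iA jA ij.
    rewrite ZSA mulr1; congr (_ * _).
    transitivity (M1 R A i j + Zs R A); last by rewrite FA1 ZA.
    by rewrite /M1 /Zs -big_split; apply: eq_bigr => H _ /=; rewrite -natr1 mulrDr mulr1.
  have e2 : M2 R S i j = \sum_(A : {set 'I_n} | ((i \in A) && (A \proper S)) && (j \in A))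
                            kappa R #|A| #|S| * (fun a => F2 R a + 2 * F1 R a + 1) #|A|.
    rewrite /M2 (step_coph (fun c : nat => c%:R ^+ 2 : R) iS jS h1) [RHS]big_mkcondr.
    apply: eq_bigr => A /andP[iA pAS]; case jA: (j \in A); last by rewrite /= mulr0n expr2 !mulr0.
    have [[ZA _ FA] [ZSA _ _]] := parts A i iA pAS.
    have [FA1 FA2] := FA i j iA jA ij.
    rewrite ZSA mulr1; congr (_ * _).
    transitivity (M2 R A i j + 2 * M1 R A i j + Zs R A); last by rewrite FA1 FA2 ZA.
    rewrite /M2 /M1 /Zs mulr_sumr -!big_split; apply: eq_bigr => H _ /=.
    by rewrite -natr1; ring.
  split.
    rewrite e1 (@sum2 R n S i j m (fun a => F1 R a + 1) iS jS ij cS).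
    rewrite (@sum_div R m (fun k => 2 * (k%:R + 2) * (k%:R + 1)) (fun k => F1 R k.+2 + 1)
               ((m%:R + 2) * (m%:R + 1) ^+ 2)).
    rewrite (eq_bigr (fun k : 'I_m => 2 * ((k : nat)%:R + 2) * ((k : nat)%:R + 1) * (1 + F1 R (k : nat).+2)));
      last by move=> k _; rewrite (addrC (F1 R _)).
    rewrite sumF1 cS; field.
    by rewrite hD1 hD2.
  rewrite e2 (@sum2 R n S i j m (fun a => F2 R a + 2 * F1 R a + 1) iS jS ij cS).
  rewrite (@sum_div R m (fun k => 2 * (k%:R + 2) * (k%:R + 1)) (fun k => F2 R k.+2 + 2 * F1 R k.+2 + 1)
             ((m%:R + 2) * (m%:R + 1) ^+ 2)).
  rewrite (eq_bigr (fun k : 'I_m => 2 * ((k : nat)%:R + 2) * ((k : nat)%:R + 1) *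
                     (1 + 2 * F1 R (k : nat).+2 + F2 R (k : nat).+2)));
    last by move=> k _; congr (_ * _); ring.
  rewrite sumF2 cS; field.
  by rewrite hD1 hD2.
Qed.


Lemma pairsum (R : rcfType) (T : finType) (P : pred T) (f g : T -> R) :
  \sum_(x | P x) \sum_(y | P y) f x * g y = (\sum_(x | P x) f x) * (\sum_(y | P y) g y).
Proof. by rewrite big_distrl; apply: eq_bigr => x _; rewrite big_distrr. Qed.

Lemma var_sum (R : rcfType) (T : finType) (P : pred T) (p a : T -> R) :
  \sum_(x | P x) \sum_(y | P y) p x * p y * (a x - a y) ^+ 2 =
  2 * (\sum_(x | P x) p x) * (\sum_(x | P x) p x * a x ^+ 2) - 2 * (\sum_(x | P x) p x * a x) ^+ 2.
Proof.
transitivity (\sum_(x | P x) \sum_(y | P y)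
   ((p x * a x ^+ 2) * p y + (-2 * (p x * a x)) * (p y * a y) + p x * (p y * a y ^+ 2))).
  by apply: eq_bigr => x _; apply: eq_bigr => y _; ring.
rewrite (eq_bigr (fun x => \sum_(y | P y) (p x * a x ^+ 2) * p y + \sum_(y | P y) (-2 * (p x * a x)) * (p y * a y)
                   + \sum_(y | P y) p x * (p y * a y ^+ 2))); last by move=> x _; rewrite !big_split.
rewrite !big_split /= !pairsum -mulr_sumr; ring.
Qed.

Lemma count_gt (R : rcfType) n (i : 'I_n) : \sum_(j < n | (i < j)%N) (1 : R) = (n - i.+1)%:R.
Proof.
rewrite -(big_mkord (fun j => (i < j)%N) (fun _ => 1 : R)).
rewrite (big_cat_nat _ (n := i.+1)) ?ltn_ord //=.
rewrite big_nat_cond big1 ?add0r; last by move=> j /andP[/andP[_ hj] hij]; lia.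
rewrite big_nat_cond (eq_bigl (fun j => (i.+1 <= j < n)%N && true)); last first.
  by move=> j /=; case: (i.+1 <= j)%N; rewrite ?andbT.
by rewrite -big_nat_cond sumr_const_nat.
Qed.

Lemma tri (R : rcfType) n : \sum_(i < n) ((n - i.+1)%:R : R) = n%:R * (n%:R - 1) / 2.
Proof.
have two0 : (2 : R) != 0 by rewrite pnatr_eq0.
elim: n => [|n IH]; first by rewrite big_ord0 mul0r mul0r.
rewrite big_ord_recl /= subSS subn0.
rewrite (eq_bigr (fun i : 'I_n => ((n - i.+1)%:R : R))); last by move=> i _; rewrite /bump /= add1n subSS.
by rewrite IH -natr1; field.
Qed.


Lemma conv (R : rcfType) n (f : {set {set 'I_n}} -> R) :
  \sum_(T in phylo_trees n) yule R T * f T = \sum_(H | tree_on setT H) w R setT H * f H.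
Proof.
apply: eq_big => [H|H _]; first by rewrite /phylo_trees inE is_phylo_tree.
by rewrite /yule /w cardsT card_ord.
Qed.

Lemma conv0 (R : rcfType) n : \sum_(T in phylo_trees n) yule R T = Zs R [set: 'I_n].
Proof.
apply: eq_big => [H|H _]; first by rewrite /phylo_trees inE is_phylo_tree.
by rewrite /yule /w cardsT card_ord.
Qed.


Unset Implicit Arguments.

Theorem theorem2 (R : rcfType) (n : nat) : (2 <= n)%N ->
  EY_D2 R n =
  (2 * n%:R) / (n%:R - 1) *
    (3 * n%:R ^+ 2 - 10 * n%:R - 1 + 8 * (n%:R + 1) * harmonic R n
     - 4 * (n%:R + 1) * harmonic R n ^+ 2).
Proof.
move=> hn.
have cT : #|[set: 'I_n]| = n.-1.+1 by rewrite cardsT card_ord; lia.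
have [ZS EE FF] := all_good R cT.
rewrite cardsT card_ord in EE FF.
rewrite /EY_D2.
transitivity (\sum_(T in phylo_trees n) \sum_(T' in phylo_trees n) \sum_(i : 'I_n) \sum_(j : 'I_n | (i <= j)%N)
   yule R T * yule R T' * ((coph T i j)%:R - (coph T' i j)%:R) ^+ 2).
  apply: eq_bigr => T _; apply: eq_bigr => T' _.
  rewrite /dphi2 sqr_sqrtr; last by apply: sumr_ge0 => i _; apply: sumr_ge0 => j _; exact: sqr_ge0.
  rewrite mulr_sumr; apply: eq_bigr => i _; by rewrite mulr_sumr.
transitivity (\sum_(i : 'I_n) \sum_(j : 'I_n | (i <= j)%N) \sum_(T in phylo_trees n) \sum_(T' in phylo_trees n)
   yule R T * yule R T' * ((coph T i j)%:R - (coph T' i j)%:R) ^+ 2).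
  rewrite (eq_bigr (fun T => \sum_(i : 'I_n) \sum_(T' in phylo_trees n) \sum_(j : 'I_n | (i <= j)%N)
        yule R T * yule R T' * ((coph T i j)%:R - (coph T' i j)%:R) ^+ 2)); last first.
    by move=> T _; exact: exchange_big.
  rewrite exchange_big; apply: eq_bigr => i _.
  rewrite (eq_bigr (fun T => \sum_(j : 'I_n | (i <= j)%N) \sum_(T' in phylo_trees n)
        yule R T * yule R T' * ((coph T i j)%:R - (coph T' i j)%:R) ^+ 2)); last first.
    by move=> T _; exact: exchange_big.
  by rewrite exchange_big.
transitivity (\sum_(i : 'I_n) \sum_(j : 'I_n | (i <= j)%N)
   (2 * Zs R [set: 'I_n] * M2 R [set: 'I_n] i j - 2 * M1 R [set: 'I_n] i j ^+ 2)).
  apply: eq_bigr => i _; apply: eq_bigr => j _.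
  rewrite (var_sum (fun T => T \in phylo_trees n) (@yule R n) (fun T => (coph T i j)%:R)).
  rewrite conv0 (conv (fun T => (coph T i j)%:R)) (conv (fun T => (coph T i j)%:R ^+ 2)).
  by [].
set a := 2 * E2 R n - 2 * E1 R n ^+ 2.
set b := 2 * F2 R n - 2 * F1 R n ^+ 2.
transitivity (\sum_(i : 'I_n) (a + b * (n - i.+1)%:R)).
  apply: eq_bigr => i _.
  rewrite (bigD1 i) ?leqnn //=.
  have [-> ->] := EE i (in_setT i); rewrite ZS mulr1; congr (_ + _).
  rewrite -count_gt mulr_sumr.
  apply: eq_big => [j|j /andP[hij nji]].
    by rewrite ltn_neqAle; case: (i <= j)%N; rewrite ?andbT ?andbF // eq_sym.
  have nij : i != j by rewrite eq_sym.
  have [-> ->] := FF i j (in_setT i) (in_setT j) nij.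
  by rewrite /b !mulr1.
rewrite big_split /= -mulr_sumr tri sumr_const card_ord -mulr_natl.
have hn1 : (n%:R - 1 : R) != 0.
  by rewrite -(subnK (ltnW hn)) natrD addrK pnatr_eq0; lia.
have two0 : (2 : R) != 0 by rewrite pnatr_eq0.
rewrite /a /b /E1 /E2 /F1 /F2.
field.
by rewrite hn1 ?two0.
Qed.
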